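(* For all $k,l\in\{1,\dots,[n/2]\}$ one has $\{J_k,J_l\}=0$, $\{F_k,F_l\}=0$ and $\{F_k,H\}=0$. Moreover, when $n$ is odd, the function $C=\dfrac{x_1x_3\cdots x_n}{x_2x_4\cdots x_{n-1}}$ is a Casimir function of the bracket $\{\cdot,\cdot\}$, i.e. $\{C,x_j\}=0$ for all $j=1,\dots,n$.
   Context: Let $n\ge1$, $(a_1,\dots,a_n)\in\mathbb R^n\setminus\{0\}$. On $\mathbb R^n$ with coordinates $x_1,\dots,x_n$ consider the Poisson bracket $\{x_i,x_j\}=x_ix_j$ for $1\le i<j\le n$ (extended by skew-symmetry and the Leibniz rule; rational functions are considered on the open dense set where their denominators do not vanish). Let $H=a_1x_1+\dots+a_nx_n$, $v_0:=0$ and $v_i:=a_1x_1+\dots+a_ix_i$ for $i=1,\dots,n$ (so $v_n=H$). For $k=1,\dots,[n/2]$ let $J_k:=\dfrac{x_1x_3\cdots x_{2k-1}}{x_2x_4\cdots x_{2k}}$. For $k=1,\dots,[(n+1)/2]$ let $F_k:=v_{2k-1}\dfrac{x_{2k+1}x_{2k+3}\cdots x_n}{x_{2k}x_{2k+2}\cdots x_{n-1}}$ if $n$ is odd, and $F_k:=v_{2k}\dfrac{x_{2k+2}x_{2k+4}\cdots x_n}{x_{2k+1}x_{2k+3}\cdots x_{n-1}}$ if $n$ is even (empty products equal $1$, so $F_{[(n+1)/2]}=H$). *)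

(* Defs.v *)
From Stdlib Require Import Reals Arith.
Open Scope R_scope.

(* Points of R^n are functions x : nat -> R; only x 1, ..., x n matter. *)

Fixpoint sum1 (k : nat) (f : nat -> R) : R :=
  match k with O => 0 | S m => sum1 m f + f (S m) end.

Fixpoint prod1 (k : nat) (f : nat -> R) : R :=
  match k with O => 1 | S m => prod1 m f * f (S m) end.

Definition upd (x : nat -> R) (i : nat) (t : R) : nat -> R :=
  fun j => if Nat.eqb j i then t else x j.

Definition is_partial (f : (nat -> R) -> R) (x : nat -> R) (i : nat) (d : R) : Prop :=
  derivable_pt_lim (fun t => f (upd x i t)) (x i) d.

Definition pi_str (x : nat -> R) (i j : nat) : R :=
  if Nat.ltb i j then x i * x j
  else if Nat.ltb j i then - (x i * x j) else 0.

(* PB n f g x v : f and g are (partially) differentiable at x and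
   {f,g}(x) = sum_{i,j=1}^n {x_i,x_j}(x) d_i f(x) d_j g(x) = v *)
Definition PB (n : nat) (f g : (nat -> R) -> R) (x : nat -> R) (v : R) : Prop :=
  exists df dg : nat -> R,
    (forall i, (1 <= i <= n)%nat -> is_partial f x i (df i) /\ is_partial g x i (dg i)) /\
    v = sum1 n (fun i => sum1 n (fun j => pi_str x i j * df i * dg j)).

Definition v (a : nat -> R) (i : nat) (x : nat -> R) : R := sum1 i (fun m => a m * x m).
Definition H (n : nat) (a : nat -> R) (x : nat -> R) : R := v a n x.

Definition numJ (k : nat) (x : nat -> R) : R := prod1 k (fun m => x (2 * m - 1)%nat).
Definition denJ (k : nat) (x : nat -> R) : R := prod1 k (fun m => x (2 * m)%nat).
Definition J (k : nat) (x : nat -> R) : R := numJ k x / denJ k x.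

(* F_k:
   n odd : v_{2k-1} * (x_{2k+1} x_{2k+3} ... x_n) / (x_{2k} x_{2k+2} ... x_{n-1})
           (c = (n+1)/2 - k factors each, j-th factor x_{2k+2j-1} resp. x_{2k+2j-2})
   n even: v_{2k} * (x_{2k+2} x_{2k+4} ... x_n) / (x_{2k+1} x_{2k+3} ... x_{n-1})
           (c = n/2 - k factors each, j-th factor x_{2k+2j} resp. x_{2k+2j-1}) *)
Definition numF (n k : nat) (x : nat -> R) : R :=
  if Nat.odd n then prod1 ((n + 1) / 2 - k) (fun j => x (2 * k + 2 * j - 1)%nat)
  else prod1 (n / 2 - k) (fun j => x (2 * k + 2 * j)%nat).
Definition denF (n k : nat) (x : nat -> R) : R :=
  if Nat.odd n then prod1 ((n + 1) / 2 - k) (fun j => x (2 * k + 2 * j - 2)%nat)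
  else prod1 (n / 2 - k) (fun j => x (2 * k + 2 * j - 1)%nat).
Definition F (n : nat) (a : nat -> R) (k : nat) (x : nat -> R) : R :=
  (if Nat.odd n then v a (2 * k - 1) x else v a (2 * k) x) * numF n k x / denF n k x.

Definition numC (n : nat) (x : nat -> R) : R := prod1 ((n + 1) / 2) (fun m => x (2 * m - 1)%nat).
Definition denC (n : nat) (x : nat -> R) : R := prod1 ((n - 1) / 2) (fun m => x (2 * m)%nat).
Definition Cas (n : nat) (x : nat -> R) : R := numC n x / denC n x.

(* Main.v *)
Require Import Defs.
From Stdlib Require Import Reals Arith Lia Lra FunctionalExtensionality.
Open Scope R_scope.

Lemma sum1_ext n f g : (forall i, (1 <= i <= n)%nat -> f i = g i) -> sum1 n f = sum1 n g.
Proof. induction n; simpl; intros Hf; auto. rewrite IHn by (intros; apply Hf; lia). rewrite Hf by lia. auto. Qed.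

Lemma sum1_plus n f g : sum1 n (fun i => f i + g i) = sum1 n f + sum1 n g.
Proof. induction n; simpl; [lra| rewrite IHn; ring]. Qed.

Lemma sum1_scal n c f : sum1 n (fun i => c * f i) = c * sum1 n f.
Proof. induction n; simpl; [ring| rewrite IHn; ring]. Qed.

Lemma sum1_swap n m (h : nat -> nat -> R) :
  sum1 n (fun i => sum1 m (fun j => h i j)) = sum1 m (fun j => sum1 n (fun i => h i j)).
Proof. induction n; simpl.
- induction m; simpl; [auto| rewrite <- IHm; ring].
- rewrite IHn. rewrite <- sum1_plus. auto. Qed.

Definition dl (u i : nat) : R := if Nat.eqb i u then 1 else 0.

Lemma sum1_dl n u f : sum1 n (fun i => dl u i * f i) =
  if andb (Nat.leb 1 u) (Nat.leb u n) then f u else 0.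
Proof. induction n; cbn [sum1].
- destruct (Nat.leb_spec 1 u), (Nat.leb_spec u 0); simpl; auto; lia.
- rewrite IHn. unfold dl.
  destruct (Nat.eqb_spec (S n) u).
  + subst. replace (Nat.leb (S n) n) with false by (symmetry; apply Nat.leb_gt; lia).
    replace (Nat.leb (S n) (S n)) with true by (symmetry; apply Nat.leb_le; lia).
    replace (Nat.leb 1 (S n)) with true by (symmetry; apply Nat.leb_le; lia); simpl; ring.
  + destruct (Nat.leb 1 u); simpl; [|ring].
    destruct (Nat.leb_spec u n), (Nat.leb_spec u (S n)); try lia; ring. Qed.

Definition sg (i j : nat) : R := if Nat.ltb i j then 1 else if Nat.ltb j i then -1 else 0.
Definition Gs n (A B : nat -> R) := sum1 n (fun i => sum1 n (fun j => sg i j * A i * B j)).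
Definition T n (B : nat -> R) i := sum1 n (fun j => sg i j * B j).

Lemma Gs_T n A B : Gs n A B = sum1 n (fun i => A i * T n B i).
Proof. unfold Gs, T. apply sum1_ext. intros i _. rewrite <- sum1_scal. apply sum1_ext. intros; ring. Qed.

Lemma T_val n B u : (1 <= u <= n)%nat -> T n B u = sum1 n B - sum1 u B - sum1 (pred u) B.
Proof.
  intros Hu. unfold T.
  assert (forall m, sum1 m (fun j => sg u j * B j) =
    if Nat.ltb m u then - sum1 m B else sum1 m B - sum1 u B - sum1 (pred u) B) as K.
  { induction m; simpl.
    - replace (Nat.ltb 0 u) with true by (symmetry; apply Nat.ltb_lt; lia). ring.
    - rewrite IHm. unfold sg.
      destruct (Nat.ltb_spec m u), (Nat.ltb_spec (S m) u), (Nat.ltb_spec u (S m)), (Nat.ltb_spec (S m) u); try lia; try ring.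
      assert (u = S m) by lia. subst. simpl. ring. }
  rewrite K. destruct (Nat.ltb_spec n u); [lia|auto]. Qed.

Lemma sum1_0 n : sum1 n (fun _ => 0) = 0.
Proof. induction n; simpl; [auto|rewrite IHn; ring]. Qed.

Lemma Gs_anti n A B : Gs n A B = - Gs n B A.
Proof. enough (Gs n A B + Gs n B A = 0) by lra.
  unfold Gs. rewrite sum1_swap, <- sum1_plus. rewrite <- (sum1_0 n).
  apply sum1_ext; intros i _. rewrite <- sum1_plus, <- (sum1_0 n). apply sum1_ext; intros j _.
  unfold sg. destruct (Nat.ltb_spec i j), (Nat.ltb_spec j i); try lia; ring. Qed.

Lemma Gs_lin_l n c1 c2 A1 A2 B :
  Gs n (fun i => c1 * A1 i + c2 * A2 i) B = c1 * Gs n A1 B + c2 * Gs n A2 B.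
Proof. rewrite !Gs_T, <- !sum1_scal, <- sum1_plus. apply sum1_ext; intros; ring. Qed.

Lemma Gs_lin_r n c1 c2 A B1 B2 :
  Gs n A (fun i => c1 * B1 i + c2 * B2 i) = c1 * Gs n A B1 + c2 * Gs n A B2.
Proof. rewrite Gs_anti, Gs_lin_l, (Gs_anti n A B1), (Gs_anti n A B2). ring. Qed.

Lemma Gs_comb n p c h B : (forall m, (1 <= m <= p)%nat -> (1 <= h m <= n)%nat) ->
  Gs n (fun i => sum1 p (fun m => c m * dl (h m) i)) B = sum1 p (fun m => c m * T n B (h m)).
Proof. intros Hh. rewrite Gs_T.
  transitivity (sum1 n (fun i => sum1 p (fun m => c m * (dl (h m) i * T n B i)))).
  { apply sum1_ext; intros. rewrite Rmult_comm, <- sum1_scal. apply sum1_ext; intros; ring. }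
  rewrite sum1_swap. apply sum1_ext; intros m Hm. rewrite sum1_scal, sum1_dl.
  destruct (Hh m Hm). destruct (Nat.leb_spec 1 (h m)), (Nat.leb_spec (h m) n); try lia; auto. Qed.

Lemma P_comb M p c h :
  sum1 M (fun i => sum1 p (fun m => c m * dl (h m) i)) =
  sum1 p (fun m => c m * (if andb (Nat.leb 1 (h m)) (Nat.leb (h m) M) then 1 else 0)).
Proof. rewrite sum1_swap. apply sum1_ext; intros m _. rewrite sum1_scal.
  f_equal. rewrite <- (sum1_dl M (h m) (fun _ => 1)). apply sum1_ext; intros; ring. Qed.

Definition LDv (f : (nat -> R) -> R) x (A : nat -> R) :=
  exists df : nat -> R, forall i, is_partial f x i (df i) /\ A i = x i * df i.

Lemma upd_same x i : upd x i (x i) = x.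
Proof. apply functional_extensionality; intro j; unfold upd. destruct (Nat.eqb_spec j i); subst; auto. Qed.

Lemma LD_eqA f x A A' : (forall i, A i = A' i) -> LDv f x A -> LDv f x A'.
Proof. intros E [df Hd]; exists df; intros i; rewrite <- E; auto. Qed.

Lemma LD_ext f g x A : (forall y, f y = g y) -> LDv f x A -> LDv g x A.
Proof. intros E. replace g with f; auto. apply functional_extensionality; auto. Qed.

Lemma LD_const r x : LDv (fun _ => r) x (fun _ => 0).
Proof. exists (fun _ => 0). intros i; split; [|ring]. unfold is_partial.
  apply (derivable_pt_lim_const r). Qed.

Lemma LD_coord m x : LDv (fun y => y m) x (fun i => x m * dl m i).
Proof. exists (fun i => dl m i). intros i. unfold dl, is_partial, upd. split.
  - destruct (Nat.eqb_spec m i), (Nat.eqb_spec i m); try lia.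
    + apply derivable_pt_lim_id.
    + apply (derivable_pt_lim_const (x m)).
  - destruct (Nat.eqb_spec i m); subst; ring. Qed.

Lemma LD_mult f g x A B : LDv f x A -> LDv g x B ->
  LDv (fun y => f y * g y) x (fun i => A i * g x + f x * B i).
Proof. intros [df Hf] [dg Hg]. exists (fun i => df i * g x + f x * dg i).
  intros i. destruct (Hf i) as [H1 E1], (Hg i) as [H2 E2]. split.
  - pose proof (derivable_pt_lim_mult _ _ _ _ _ H1 H2) as K. unfold mult_fct in K.
    cbv beta in K. rewrite upd_same in K. exact K.
  - rewrite E1, E2; ring. Qed.

Lemma LD_plus f g x A B : LDv f x A -> LDv g x B ->
  LDv (fun y => f y + g y) x (fun i => A i + B i).
Proof. intros [df Hf] [dg Hg]. exists (fun i => df i + dg i).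
  intros i. destruct (Hf i) as [H1 E1], (Hg i) as [H2 E2]. split.
  - exact (derivable_pt_lim_plus _ _ _ _ _ H1 H2).
  - rewrite E1, E2; ring. Qed.

Lemma LD_div f g x A B : g x <> 0 -> LDv f x A -> LDv g x B ->
  LDv (fun y => f y / g y) x (fun i => (A i * g x - f x * B i) / (g x * g x)).
Proof. intros Hgx [df Hf] [dg Hg]. exists (fun i => (df i * g x - dg i * f x) / (g x * g x)).
  intros i. destruct (Hf i) as [H1 E1], (Hg i) as [H2 E2]. split.
  - assert (Hg' : (fun t => g (upd x i t)) (x i) <> 0) by (cbv beta; rewrite upd_same; auto).
    pose proof (derivable_pt_lim_div _ _ _ _ _ H1 H2 Hg') as K. unfold div_fct, Rsqr in K.
    cbv beta in K. rewrite upd_same in K. exact K.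
  - rewrite E1, E2. field. auto. Qed.

Lemma PB_of_LD n f g x A B : LDv f x A -> LDv g x B -> PB n f g x (Gs n A B).
Proof. intros [df Hf] [dg Hg]. exists df, dg. split.
  - intros i _. split; apply Hf || apply Hg.
  - unfold Gs. apply sum1_ext; intros i _. apply sum1_ext; intros j _.
    rewrite (proj2 (Hf i)), (proj2 (Hg j)). unfold pi_str, sg.
    destruct (Nat.ltb i j), (Nat.ltb j i); ring. Qed.

Definition alpha (a : nat -> R) p x i := sum1 p (fun m => (a m * x m) * dl m i).

Lemma LD_v a p x : LDv (v a p) x (alpha a p x).
Proof. induction p.
  - eapply LD_eqA; [|apply (LD_const 0)]. intros; reflexivity.
  - eapply LD_ext; [|eapply LD_eqA; [|apply (LD_plus _ _ _ _ _ IHp (LD_mult _ _ _ _ _ (LD_const (a (S p)) x) (LD_coord (S p) x)))]].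
    + intros y; reflexivity.
    + intros i; unfold alpha; simpl. ring. Qed.

Definition cnt c (h : nat -> nat) i := sum1 c (fun j => 1 * dl (h j) i).

Lemma LD_prod c h x : LDv (fun y => prod1 c (fun j => y (h j))) x
   (fun i => prod1 c (fun j => x (h j)) * cnt c h i).
Proof. induction c.
  - eapply LD_eqA; [|apply (LD_const 1)]. intros; unfold cnt; simpl; ring.
  - eapply LD_ext; [|eapply LD_eqA; [|apply (LD_mult _ _ _ _ _ IHc (LD_coord (h (S c)) x))]].
    + intros y; reflexivity.
    + intros i; unfold cnt; simpl. ring. Qed.

Lemma sum1_opp n f : sum1 n (fun i => - f i) = - sum1 n f.
Proof. induction n; simpl; [ring| rewrite IHn; ring]. Qed.

Definition Ev c hN hD i := 1 * cnt c hN i + (-1) * cnt c hD i.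

Lemma telesc Q p c : sum1 c (fun j => Q (p + 2 * j)%nat - Q (p + 2 * pred j)%nat) = Q (p + 2 * c)%nat - Q p.
Proof. induction c; cbn [sum1].
  - replace (p + 2 * 0)%nat with p by lia. ring.
  - rewrite IHc. replace (p + 2 * pred (S c))%nat with (p + 2 * c)%nat by lia. ring. Qed.

Lemma G_e n p c hN hD B : (p + 2 * c <= n)%nat ->
  (forall j, (1 <= j <= c)%nat -> hN j = (p + 2 * j)%nat /\ hD j = (p + 2 * j - 1)%nat) ->
  Gs n (Ev c hN hD) B = - (sum1 (p + 2 * c) B - sum1 p B).
Proof. intros Hn Hh. unfold Ev, cnt. rewrite Gs_lin_l.
  rewrite !Gs_comb.
  2,3: intros m Hm; destruct (Hh m Hm); lia.
  rewrite <- (telesc (fun m => sum1 m B) p c), <- !(sum1_scal c), <- sum1_plus, <- sum1_opp.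
  apply sum1_ext; intros j Hj. destruct (Hh j Hj) as [E1 E2]. rewrite E1, E2.
  rewrite !T_val by lia.
  replace (pred (p + 2 * j))%nat with (p + 2 * j - 1)%nat by lia.
  replace (pred (p + 2 * j - 1))%nat with (p + 2 * pred j)%nat by lia. ring. Qed.

Lemma P_e M p c hN hD : ((M <= p)%nat \/ exists t, M = (p + 2 * t)%nat) ->
  (forall j, (1 <= j <= c)%nat -> hN j = (p + 2 * j)%nat /\ hD j = (p + 2 * j - 1)%nat) ->
  sum1 M (Ev c hN hD) = 0.
Proof. intros HM Hh. unfold Ev, cnt. rewrite sum1_plus, !sum1_scal, !P_comb.
  rewrite <- !(sum1_scal c), <- sum1_plus. transitivity (sum1 c (fun _ => 0)); [|apply sum1_0]. apply sum1_ext; intros j Hj.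
  destruct (Hh j Hj) as [E1 E2]. rewrite E1, E2.
  destruct (Nat.leb_spec 1 (p + 2*j)), (Nat.leb_spec (p+2*j) M), (Nat.leb_spec 1 (p + 2*j - 1)),
    (Nat.leb_spec (p+2*j-1) M); simpl; try ring; exfalso; destruct HM as [HM|[t Ht]]; lia. Qed.

Lemma trunc_sum p M c : sum1 p (fun m => c m * (if andb (Nat.leb 1 m) (Nat.leb m M) then 1 else 0)) = sum1 (Nat.min p M) c.
Proof. induction p; cbn [sum1].
  - reflexivity.
  - rewrite IHp. destruct (Nat.leb_spec (S p) M).
    + rewrite (Nat.min_l (S p)), (Nat.min_l p) by lia. simpl. ring.
    + rewrite (Nat.min_r (S p)), (Nat.min_r p) by lia. destruct (Nat.leb 1 (S p)); simpl; ring. Qed.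

Lemma P_alpha a p x M : sum1 M (alpha a p x) = v a (Nat.min p M) x.
Proof. unfold alpha. rewrite (P_comb M p (fun m => a m * x m) (fun m => m)). apply trunc_sum. Qed.

Lemma sq_sum a x p W : sum1 p (fun m => a m * x m * (W - v a m x - v a (pred m) x)) = v a p x * W - v a p x * v a p x.
Proof. induction p; cbn [sum1].
  - unfold v; simpl; ring.
  - rewrite IHp. unfold v; cbn [sum1 pred]. ring. Qed.

Lemma G_aa n a x p p' : (p <= p')%nat -> (p' <= n)%nat ->
  Gs n (alpha a p x) (alpha a p' x) = v a p x * (v a p' x - v a p x).
Proof. intros H1 H2. unfold alpha at 1. rewrite (Gs_comb n p (fun m => a m * x m) (fun m => m)).
  2: intros; lia.
  replace (v a p x * (v a p' x - v a p x)) with (v a p x * v a p' x - v a p x * v a p x) by ring.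
  rewrite <- sq_sum. apply sum1_ext; intros m Hm. rewrite T_val by lia.
  rewrite !P_alpha. rewrite (Nat.min_l p' n), (Nat.min_r p' m), (Nat.min_r p' (pred m)) by lia.
  reflexivity. Qed.

Definition Fgen a p c (hN hD : nat -> nat) (y : nat -> R) :=
  v a p y * prod1 c (fun j => y (hN j)) / prod1 c (fun j => y (hD j)).

Definition AF a p c hN hD x i :=
  (prod1 c (fun j => x (hN j)) / prod1 c (fun j => x (hD j))) * alpha a p x i +
  (prod1 c (fun j => x (hN j)) / prod1 c (fun j => x (hD j)) * v a p x) * Ev c hN hD i.

Lemma LD_F a p c hN hD x : prod1 c (fun j => x (hD j)) <> 0 ->
  LDv (Fgen a p c hN hD) x (AF a p c hN hD x).
Proof. intros HD. eapply LD_eqA; [| apply (LD_div _ (fun y => prod1 c (fun j => y (hD j))) x _ _ HD (LD_mult _ _ _ _ _ (LD_v a p x) (LD_prod c hN x)) (LD_prod c hD x))].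
  intros i. unfold AF, Ev. field. auto. Qed.

Definition Hyp p c (hN hD : nat -> nat) :=
  forall j, (1 <= j <= c)%nat -> hN j = (p + 2 * j)%nat /\ hD j = (p + 2 * j - 1)%nat.

Lemma core_FF n a x p c hN hD p' c' hN' hD' :
  (p <= p')%nat -> (p + 2 * c = n)%nat -> (p' + 2 * c' = n)%nat ->
  Hyp p c hN hD -> Hyp p' c' hN' hD' ->
  Gs n (AF a p c hN hD x) (AF a p' c' hN' hD' x) = 0.
Proof. intros Hp Hc Hc' HH HH'. unfold AF at 1. rewrite Gs_lin_l.
  rewrite (G_e n p c hN hD) by (auto; lia). rewrite Hc.
  unfold AF. rewrite Gs_lin_r, G_aa by lia.
  rewrite (Gs_anti n (alpha a p x) (Ev c' hN' hD')).
  rewrite (G_e n p' c' hN' hD') by (auto; lia). rewrite Hc'.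
  rewrite !sum1_plus, !sum1_scal, !P_alpha.
  rewrite (P_e n p' c' hN' hD'), (P_e p p' c' hN' hD') by (auto; right; exists c'; lia) || (auto; left; lia).
  rewrite (Nat.min_l p n), (Nat.min_l p p'), (Nat.min_l p' n), (Nat.min_r p' p) by lia.
  ring. Qed.

Lemma core_FH n a x p c hN hD :
  (p + 2 * c = n)%nat -> Hyp p c hN hD ->
  Gs n (AF a p c hN hD x) (alpha a n x) = 0.
Proof. intros Hc HH. unfold AF. rewrite Gs_lin_l.
  rewrite (G_e n p c hN hD) by (auto; lia). rewrite Hc.
  rewrite G_aa by lia. rewrite !P_alpha.
  rewrite (Nat.min_l n n), (Nat.min_r n p) by lia. ring. Qed.

Lemma PB_val n f g x w w' : PB n f g x w -> w = w' -> PB n f g x w'.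
Proof. intros H E; subst; auto. Qed.

Definition pk n k := if Nat.odd n then (2 * k - 1)%nat else (2 * k)%nat.

Lemma div2_odd m : ((2 * m + 1) / 2 = m)%nat.
Proof. symmetry; apply Nat.div_unique with 1%nat; lia. Qed.
Lemma div2_even m : ((2 * m) / 2 = m)%nat.
Proof. symmetry; apply Nat.div_unique with 0%nat; lia. Qed.

Lemma F_form n a k : (1 <= k <= n / 2)%nat -> exists c hN hD,
  (forall y, F n a k y = Fgen a (pk n k) c hN hD y) /\
  (forall y, denF n k y = prod1 c (fun j => y (hD j))) /\
  Hyp (pk n k) c hN hD /\ (pk n k + 2 * c = n)%nat.
Proof. intros Hk. unfold pk. destruct (Nat.odd n) eqn:Ho.
  - destruct (proj1 (Nat.odd_spec n) Ho) as [m Hm].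
    assert (E1 : ((n + 1) / 2 = S m)%nat).
    { rewrite Hm. replace (2 * m + 1 + 1)%nat with (2 * S m)%nat by lia. apply div2_even. }
    assert (E2 : (n / 2 = m)%nat) by (rewrite Hm; apply div2_odd).
    rewrite E2 in Hk.
    exists (S m - k)%nat, (fun j => (2 * k + 2 * j - 1)%nat), (fun j => (2 * k + 2 * j - 2)%nat).
    split; [|split; [|split]].
    + intros y. unfold F, numF, denF, Fgen. rewrite Ho, E1. reflexivity.
    + intros y. unfold denF. rewrite Ho, E1. reflexivity.
    + intros j Hj. lia.
    + lia.
  - assert (He : Nat.even n = true) by (rewrite <- Nat.negb_odd, Ho; reflexivity).
    destruct (proj1 (Nat.even_spec n) He) as [m Hm].
    assert (E2 : (n / 2 = m)%nat) by (rewrite Hm; apply div2_even).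
    rewrite E2 in Hk.
    exists (n / 2 - k)%nat, (fun j => (2 * k + 2 * j)%nat), (fun j => (2 * k + 2 * j - 1)%nat).
    split; [|split; [|split]].
    + intros y. unfold F, numF, denF, Fgen. rewrite Ho. reflexivity.
    + intros y. unfold denF. rewrite Ho. reflexivity.
    + intros j Hj. lia.
    + lia. Qed.

Lemma PB_ext n f f' g g' x w : (forall y, f y = f' y) -> (forall y, g y = g' y) ->
  PB n f' g' x w -> PB n f g x w.
Proof. intros E1 E2. replace f with f'; [replace g with g'|]; auto;
  apply functional_extensionality; intros; auto. Qed.

Lemma Gs_scal_l n c A B : Gs n (fun i => c * A i) B = c * Gs n A B.
Proof. rewrite <- (Rplus_0_r (c * Gs n A B)), <- (Rmult_0_l (Gs n A B)), <- Gs_lin_l.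
  unfold Gs; apply sum1_ext; intros; apply sum1_ext; intros; ring. Qed.
Lemma Gs_scal_r n c A B : Gs n A (fun i => c * B i) = c * Gs n A B.
Proof. rewrite Gs_anti, Gs_scal_l, (Gs_anti n A B). ring. Qed.

Definition ej (m : nat) := (2 * m)%nat.
Definition oj (m : nat) := (2 * m - 1)%nat.

Lemma Hyp_J k : Hyp 0 k ej oj.
Proof. intros j Hj; unfold ej, oj; lia. Qed.

Lemma LD_J k x : denJ k x <> 0 ->
  LDv (J k) x (fun i => - (numJ k x / denJ k x) * Ev k ej oj i).
Proof. intros HD. unfold denJ in HD.
  eapply LD_eqA; [| apply (LD_div _ (fun y => prod1 k (fun j => y (2 * j)%nat)) x _ _ HD (LD_prod k oj x) (LD_prod k ej x))].
  intros i. unfold Ev, numJ, denJ, oj, ej. field. auto. Qed.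

Lemma part1 n k l x : (1 <= k <= n / 2)%nat -> (1 <= l <= n / 2)%nat ->
      denJ k x <> 0 -> denJ l x <> 0 -> PB n (J k) (J l) x 0.
Proof. intros Hk Hl H1 H2. eapply PB_val; [apply (PB_of_LD n _ _ x _ _ (LD_J k x H1) (LD_J l x H2))|].
  rewrite Gs_scal_l, Gs_scal_r.
  assert (2 * (n / 2) <= n)%nat by (apply Nat.Div0.mul_div_le; lia).
  rewrite (G_e n 0 k ej oj) by (auto using Hyp_J; lia).
  rewrite (P_e (0 + 2 * k) 0 l ej oj), (P_e 0 0 l ej oj) by (auto using Hyp_J; (left; lia) || (right; exists k; lia)).
  ring. Qed.

Lemma part2 n a k l x : (1 <= k <= n / 2)%nat -> (1 <= l <= n / 2)%nat ->
      denF n k x <> 0 -> denF n l x <> 0 -> PB n (F n a k) (F n a l) x 0.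
Proof. intros Hk Hl H1 H2.
  destruct (F_form n a k Hk) as (c & hN & hD & E1 & D1 & Y1 & S1).
  destruct (F_form n a l Hl) as (c' & hN' & hD' & E1' & D1' & Y1' & S1').
  rewrite D1 in H1. rewrite D1' in H2.
  eapply PB_ext; [exact E1|exact E1'|].
  eapply PB_val; [apply (PB_of_LD n _ _ x _ _ (LD_F a _ _ _ _ x H1) (LD_F a _ _ _ _ x H2))|].
  assert (Hm : forall k l, (k <= l)%nat -> (pk n k <= pk n l)%nat) by (intros; unfold pk; destruct (Nat.odd n); lia).
  destruct (Nat.le_ge_cases k l).
  - apply core_FF; auto.
  - rewrite Gs_anti, core_FF; auto. ring. Qed.

Lemma part3 n a k x : (1 <= k <= n / 2)%nat -> denF n k x <> 0 -> PB n (F n a k) (H n a) x 0.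
Proof. intros Hk H1.
  destruct (F_form n a k Hk) as (c & hN & hD & E1 & D1 & Y1 & S1).
  rewrite D1 in H1.
  eapply PB_ext; [exact E1|intros y; reflexivity|].
  eapply PB_val; [apply (PB_of_LD n _ _ x _ _ (LD_F a _ _ _ _ x H1) (LD_v a n x))|].
  apply core_FH; auto. Qed.

Lemma part4 n : Nat.odd n = true -> forall j x, (1 <= j <= n)%nat -> denC n x <> 0 ->
  PB n (Cas n) (fun y => y j) x 0.
Proof. intros Ho j x Hj HD.
  destruct (proj1 (Nat.odd_spec n) Ho) as [m Hm].
  assert (E1 : ((n + 1) / 2 = S m)%nat).
  { rewrite Hm. replace (2 * m + 1 + 1)%nat with (2 * S m)%nat by lia. apply div2_even. }
  assert (E2 : ((n - 1) / 2 = m)%nat).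
  { rewrite Hm. replace (2 * m + 1 - 1)%nat with (2 * m)%nat by lia. apply div2_even. }
  unfold denC in HD. rewrite E2 in HD.
  assert (LC : LDv (Cas n) x (fun i => (numC n x / denC n x) * (-1 * Ev m ej oj i + 1 * dl n i))).
  { eapply LD_ext; [intros y; unfold Cas, numC, denC; rewrite E1, E2; reflexivity|].
    eapply LD_eqA; [| apply (LD_div _ (fun y => prod1 m (fun j => y (2 * j)%nat)) x _ _ HD (LD_prod (S m) oj x) (LD_prod m ej x))].
    intros i. unfold Ev, numC, denC, cnt. rewrite E1, E2. cbn [sum1].
    replace (oj (S m)) with n by (unfold oj; lia). unfold oj, ej. field. auto. }
  eapply PB_val; [apply (PB_of_LD n _ _ x _ _ LC (LD_coord j x))|].
  rewrite Gs_scal_l, Gs_scal_r, Gs_lin_l.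
  rewrite (G_e n 0 m ej oj) by (auto using Hyp_J; lia).
  rewrite Gs_T, sum1_dl.
  destruct (Nat.leb_spec 1 n), (Nat.leb_spec n n); try lia. simpl andb. cbv iota.
  rewrite T_val by lia. replace (pred n) with (0 + 2 * m)%nat by lia. simpl sum1 at 2. ring. Qed.

Theorem proposition2p2 (n : nat) (a : nat -> R) :
  (1 <= n)%nat ->
  (exists i, (1 <= i <= n)%nat /\ a i <> 0) ->
  (forall (k l : nat) (x : nat -> R),
      (1 <= k <= n / 2)%nat -> (1 <= l <= n / 2)%nat ->
      denJ k x <> 0 -> denJ l x <> 0 ->
      PB n (J k) (J l) x 0) /\
  (forall (k l : nat) (x : nat -> R),
      (1 <= k <= n / 2)%nat -> (1 <= l <= n / 2)%nat ->
      denF n k x <> 0 -> denF n l x <> 0 ->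
      PB n (F n a k) (F n a l) x 0) /\
  (forall (k : nat) (x : nat -> R),
      (1 <= k <= n / 2)%nat ->
      denF n k x <> 0 ->
      PB n (F n a k) (H n a) x 0) /\
  (Nat.odd n = true ->
   forall (j : nat) (x : nat -> R),
      (1 <= j <= n)%nat ->
      denC n x <> 0 ->
      PB n (Cas n) (fun y => y j) x 0).
Proof.
  intros _ _. split; [|split; [|split]].
  - intros; apply part1; auto.
  - intros; apply part2; auto.
  - intros; apply part3; auto.
  - apply part4.
Qed.
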